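(* The Top-$t$ Truncated Harmonic rule has metric distortion $O(m/t)$ (indeed at most $21m/t$).
   Context: Setting: $n$ agents, $m$ alternatives, $1\le t\le m$; each agent has an underlying strict ranking but only her ordered top-$t$ list is reported (top-$t$ profile $\vec\sigma_t$); $r_i(Y)\in\{1,\dots,t\}$ is the reported rank of $Y$ when $Y$ is among $i$'s top $t$; $H_t=\sum_{k=1}^t1/k$. For the reported information, $Y\succ_i\hat X$ holds when $Y$ is among $i$'s top $t$ and either $\hat X$ is not among them or $r_i(Y)<r_i(\hat X)$. Metric framework: a pseudometric $d$ on agents and alternatives is consistent with $\vec\sigma_t$ if for some full ranking profile whose top-$t$ prefixes agree with $\vec\sigma_t$, $X\succ_iY\Rightarrow d(i,X)\le d(i,Y)$. $\mathrm{SC}(X,d)=\sum_id(i,X)$; metric distortion of $f$: $\sup_{\vec\sigma_t}\sup_d\mathbb E_{X\sim f(\vec\sigma_t)}[\mathrm{SC}(X,d)]/\min_X\mathrm{SC}(X,d)$. Top-$t$ Truncated Harmonic rule: fix a deterministic voting rule $g$ on top-$t$ profiles with metric distortion at most $6m/t+1$ (such a rule exists), and let $\hat X=g(\vec\sigma_t)$. Pick an agent $i$ uniformly at random and output $Y$ with probability $p(i,Y)=\frac{1}{2H_t r_i(Y)}$ if $Y\succ_i\hat X$, $p(i,\hat X)=1-\sum_{Y\succ_i\hat X}p(i,Y)$, and $p(i,Y)=0$ otherwise. *)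

(* Defs.v *)
From HB Require Import structures.
From mathcomp Require Import all_boot all_order all_algebra.
From mathcomp Require Import reals.
Set Implicit Arguments. Unset Strict Implicit. Unset Printing Implicit Defensive.
Import Order.TTheory GRing.Theory Num.Theory.
Local Open Scope ring_scope.

(* Agents are 'I_n, alternatives are 'I_m.  A top-t profile assigns to each
   agent i an injective list (sigma i : 'I_t -> 'I_m); sigma i k is the
   alternative reported at position k (reported rank k+1). *)
Record topt_profile (n m t : nat) := TopT {
  tp :> 'I_n -> 'I_t -> 'I_m;
  tp_inj : forall i, injective (tp i) }.

Definition pseudometric (R : realType) (n m : nat)
    (d : 'I_n + 'I_m -> 'I_n + 'I_m -> R) : Prop :=
  [/\ forall x, d x x = 0,
      forall x y, 0 <= d x y,
      forall x y, d x y = d y x &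
      forall x y z, d x z <= d x y + d y z].

(* d is consistent with sigma: some full ranking profile pi (pi i a = the
   alternative at position a in agent i's full ranking) extends sigma and
   positions earlier are weakly closer. *)
Definition consistent (R : realType) (n m t : nat) (sigma : topt_profile n m t)
    (d : 'I_n + 'I_m -> 'I_n + 'I_m -> R) : Prop :=
  exists pi : 'I_n -> 'I_m -> 'I_m,
    [/\ forall i, injective (pi i),
        forall i (k : 'I_t) (a : 'I_m), val a = val k -> pi i a = sigma i k &
        forall i (a b : 'I_m), (a < b)%N ->
          d (inl i) (inr (pi i a)) <= d (inl i) (inr (pi i b))].

Definition SC (R : realType) (n m : nat)
    (d : 'I_n + 'I_m -> 'I_n + 'I_m -> R) (X : 'I_m) : R :=
  \sum_(i < n) d (inl i) (inr X).

(* Reported rank r_i(Y) in {1..t}, or 0 if Y is not among i's top t. *)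
Definition rnk (n m t : nat) (sigma : topt_profile n m t) (i : 'I_n) (Y : 'I_m)
    : nat :=
  match [pick k | sigma i k == Y] with Some k => (val k).+1 | None => 0%N end.

Definition prefers (n m t : nat) (sigma : topt_profile n m t) (i : 'I_n)
    (Y X : 'I_m) : bool :=
  [exists k : 'I_t, (sigma i k == Y) &&
     [forall k' : 'I_t, (sigma i k' == X) ==> (k < k')%N]].

Definition harmonic (R : realType) (t : nat) : R :=
  \sum_(k < t) ((k.+1)%:R)^-1.

Definition th_prob (R : realType) (n m t : nat) (sigma : topt_profile n m t)
    (Xh : 'I_m) (i : 'I_n) (Y : 'I_m) : R :=
  let q := fun Z : 'I_m => (2 * harmonic R t * (rnk sigma i Z)%:R)^-1 in
  if Y == Xh then 1 - \sum_(Z < m | prefers sigma i Z Xh) q Z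
  else if prefers sigma i Y Xh then q Y else 0.

Definition th_expected_SC (R : realType) (n m t : nat)
    (g : topt_profile n m t -> 'I_m) (sigma : topt_profile n m t)
    (d : 'I_n + 'I_m -> 'I_n + 'I_m -> R) : R :=
  (n%:R)^-1 * \sum_(i < n) \sum_(Y < m) th_prob R sigma (g sigma) i Y * SC d Y.

(* Main.v *)
Require Import Defs.
From HB Require Import structures.
From mathcomp Require Import all_boot all_order all_algebra.
From mathcomp Require Import reals.
From mathcomp Require Import ring lra.
Import Order.TTheory GRing.Theory Num.Theory.
Local Open Scope ring_scope.

Lemma pref_le (R : realType) (n m t : nat) (htm : (t <= m)%N)
  (sigma : topt_profile n m t) (d : 'I_n + 'I_m -> 'I_n + 'I_m -> R) i Y X :
  consistent sigma d -> prefers sigma i Y X ->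
  d (inl i) (inr Y) <= d (inl i) (inr X).
Proof.
case=> pi [pinj pext pmon] /existsP [k /andP [/eqP hk /forallP hk']].
have /codomP [b hb] := injF_onto (pinj i) X.
have kt := ltn_ord k.
have km : (k < m)%N by apply: leq_trans kt htm.
have -> : Y = pi i (Ordinal km) by rewrite (pext i k) // hk.
rewrite hb; apply: pmon => /=.
case: (ltnP b t) => hbt.
- have := hk' (Ordinal hbt); rewrite -(pext i (Ordinal hbt) b) // -hb eqxx /=.
  by apply.
- by apply: leq_trans kt hbt.
Qed.

Lemma rnk_sigma (n m t : nat) (sigma : topt_profile n m t) i k :
  rnk sigma i (sigma i k) = k.+1.
Proof.
rewrite /rnk; case: pickP => [k' /eqP /(@tp_inj _ _ _ sigma i) -> //|].
by move=> /(_ k); rewrite eqxx.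
Qed.

Lemma harm_bound (R : realType) (n m t : nat) (sigma : topt_profile n m t) i Xh :
  \sum_(Z < m | prefers sigma i Z Xh) ((rnk sigma i Z)%:R : R)^-1 <= harmonic R t.
Proof.
apply: (@le_trans _ _ (\sum_(Z < m) \sum_(k < t | sigma i k == Z) ((rnk sigma i Z)%:R : R)^-1)).
  rewrite [X in _ <= X](bigID (fun Z => prefers sigma i Z Xh)) /=.
  rewrite -[X in X <= _]addr0; apply: lerD.
    apply: ler_sum => Z /existsP [k /andP [hk _]].
    rewrite (bigD1 k) //= lerDl; apply: sumr_ge0 => *; by rewrite invr_ge0.
  by apply: sumr_ge0 => *; apply: sumr_ge0 => *; rewrite invr_ge0.
rewrite (exchange_big_dep xpredT) //= /harmonic; apply: ler_sum => k _.
under eq_bigl do rewrite eq_sym.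
rewrite (big_pred1_eq _ (sigma i k)) ?rnk_sigma //.
Qed.

Lemma harm_pos (R : realType) t : (0 < t)%N -> 0 < harmonic R t.
Proof.
case: t => // t _; rewrite /harmonic big_ord_recl /=.
rewrite invr1; apply: (@lt_le_trans _ _ 1) => //; rewrite lerDl.
by apply: sumr_ge0 => *; rewrite invr_ge0.
Qed.

Lemma S_half (R : realType) (n m t : nat) (ht : (0 < t)%N) (sigma : topt_profile n m t) i Xh :
  \sum_(Z < m | prefers sigma i Z Xh) (2 * harmonic R t * (rnk sigma i Z)%:R)^-1 <= 2^-1.
Proof.
have hH := @harm_pos R t ht.
under eq_bigr do rewrite invfM.
rewrite -big_distrr /=.
apply: (@le_trans _ _ ((2 * harmonic R t)^-1 * harmonic R t)).
  by apply: ler_wpM2l; [rewrite invr_ge0; lra | apply: harm_bound].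
by rewrite invfM -mulrA mulVf ?mulr1 // gt_eqF.
Qed.

Lemma pref_irr (n m t : nat) (sigma : topt_profile n m t) i X : ~~ prefers sigma i X X.
Proof.
apply/negP => /existsP [k /andP [hk /forallP /(_ k)]].
by rewrite hk ltnn.
Qed.

Lemma agent_bound (R : realType) (n m t : nat) (ht : (0 < t)%N) (htm : (t <= m)%N)
  (sigma : topt_profile n m t) (d : 'I_n + 'I_m -> 'I_n + 'I_m -> R) Xh i :
  pseudometric d -> consistent sigma d ->
  \sum_(Y < m) th_prob R sigma Xh i Y * SC d Y <=
    SC d Xh + n%:R * d (inl i) (inr Xh).
Proof.
move=> [d0 dge dsym dtri] hcons.
set q := fun Z : 'I_m => (2 * harmonic R t * (rnk sigma i Z)%:R)^-1.
set S := \sum_(Z < m | prefers sigma i Z Xh) q Z.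
have hS : S <= 2^-1 by apply: S_half.
have hq : forall Z, 0 <= q Z by move=> Z; rewrite /q invr_ge0 !mulr_ge0 // ?ler0n //;
  apply: ltW; apply: harm_pos.
rewrite (bigD1 Xh) //=.
have -> : th_prob R sigma Xh i Xh = 1 - S by rewrite /th_prob eqxx.
have -> : \sum_(Y < m | Y != Xh) th_prob R sigma Xh i Y * SC d Y =
          \sum_(Y < m | prefers sigma i Y Xh) q Y * SC d Y.
  rewrite big_mkcond [RHS]big_mkcond; apply: eq_bigr => Y _ /=.
  rewrite /th_prob; case: eqP => [->|_] /=; first by rewrite (negbTE (pref_irr _ _ _ sigma i Xh)).
  by case: (prefers sigma i Y Xh); rewrite ?mul0r.
set P := d (inl i) (inr Xh).
have hP : 0 <= n%:R * P by apply: mulr_ge0; [apply: ler0n | apply: dge].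
have hSC : forall Y, prefers sigma i Y Xh -> SC d Y <= SC d Xh + 2 * (n%:R * P).
  move=> Y hY.
  have h1 : d (inl i) (inr Y) <= P by exact: (@pref_le R n m t htm sigma d i Y Xh hcons hY).
  have h2 : d (inr Xh) (inr Y) <= 2 * P.
    have := dtri (inr Xh) (inl i) (inr Y); have := dsym (inr Xh) (inl i); rewrite -/P; lra.
  apply: (@le_trans _ _ (\sum_(j < n) (d (inl j) (inr Xh) + d (inr Xh) (inr Y)))).
    by apply: ler_sum => j _; apply: dtri.
  rewrite big_split /= sumr_const card_ord -/(SC d Xh) -mulr_natl.
  rewrite lerD2l; have := ler_wpM2l (ler0n R n) h2; lra.
have hsum : \sum_(Y < m | prefers sigma i Y Xh) q Y * SC d Y <=
            S * (SC d Xh + 2 * (n%:R * P)).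
  rewrite /S big_distrl /=; apply: ler_sum => Y hY.
  by apply: ler_wpM2l; [apply: hq | apply: hSC].
have hS0 : 0 <= S by apply: sumr_ge0.
nra.
Qed.

Theorem mainTheorem12 (R : realType) (n m t : nat)
  (hn : (0 < n)%N) (ht : (0 < t)%N) (htm : (t <= m)%N)
  (g : topt_profile n m t -> 'I_m)
  (hg : forall (sigma : topt_profile n m t)
          (d : 'I_n + 'I_m -> 'I_n + 'I_m -> R),
          pseudometric d -> consistent sigma d ->
          forall X : 'I_m,
            SC d (g sigma) <= (6 * m%:R / t%:R + 1) * SC d X) :
  forall (sigma : topt_profile n m t)
         (d : 'I_n + 'I_m -> 'I_n + 'I_m -> R),
    pseudometric d -> consistent sigma d ->
    forall X : 'I_m,
      th_expected_SC g sigma d <= (21 * m%:R / t%:R) * SC d X.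
Proof.
move=> sigma d hpm hcons X.
have hA := hg sigma d hpm hcons X.
set A := SC d (g sigma) in hA *.
have hB : 0 <= SC d X.
  by case: hpm => _ dge _ _; apply: sumr_ge0 => j _; apply: dge.
have hsum : \sum_(i < n) \sum_(Y < m) th_prob R sigma (g sigma) i Y * SC d Y
            <= \sum_(i < n) (A + n%:R * d (inl i) (inr (g sigma))).
  by apply: ler_sum => i _; apply: agent_bound.
rewrite big_split /= sumr_const card_ord -big_distrr /= -/(SC d (g sigma)) -/A in hsum.
have hn0 : (0 : R) < n%:R by rewrite ltr0n.
have h2 : th_expected_SC g sigma d <= 2 * A.
  rewrite /th_expected_SC.
  apply: (@le_trans _ _ (n%:R^-1 * (A *+ n + n%:R * A))).
    by apply: ler_wpM2l => //; rewrite invr_ge0 ltW.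
  have -> : A *+ n + n%:R * A = n%:R * (2 * A) by rewrite -mulr_natr; ring.
  by rewrite mulKf ?gt_eqF.
have ht0 : (0 : R) < t%:R by rewrite ltr0n.
pose r : R := m%:R / t%:R.
have hr : 1 <= r.
  by rewrite /r ler_pdivlMr // mul1r ler_nat.
have -> : 21 * m%:R / t%:R = 21 * r :> R by rewrite /r mulrA.
have e6 : 6 * m%:R / t%:R = 6 * r :> R by rewrite /r mulrA.
rewrite e6 in hA.
nra.
Qed.
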